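(* Let $\mathcal{A}$ be a virtual orbifold atlas on a compact metrizable space $X$, indexed by a finite poset $\mathcal{I}$, for which the relation $\curlyvee$ is an equivalence relation. Order $\mathcal{I}$ as $\{I_1,\dots,I_m\}$ such that for each $k$, $I_k\preccurlyeq J$ implies $J\in\{I_k,I_{k+1},\dots,I_m\}$. For each $k$ let $|\mathcal{A}_k|$ be the quotient of $\bigsqcup_{i\ge k}U_{I_i}$ by the equivalence relation induced by $\curlyvee$, with the quotient topology. Then for each $k<m$ the natural map $|\mathcal{A}_{k+1}|\to|\mathcal{A}_k|$ is a homeomorphism onto an open subset.
   Context: A topological orbifold (possibly non-effective) and an orbifold vector bundle are defined via charts $(\tilde U,\Gamma,\varphi)$ with $\tilde U$ a topological manifold and $\Gamma$ a finite group acting continuously. A virtual orbifold chart on $X$ is $C=(U,E,S,\psi,F)$: $U$ an orbifold, $E\to U$ an orbifold vector bundle, $S$ a continuous section, $F\subset X$ open, $\psi:S^{-1}(0)\to F$ a homeomorphism. A coordinate change from $C_I$ to $C_J$ is $T_{JI}=(U_{JI},\phi_{JI},\widehat\phi_{JI})$: $U_{JI}\subset U_I$ open, $\phi_{JI}:U_{JI}\to U_J$ an orbifold embedding (continuous, homeomorphism onto its image, locally an equivariant locally flat embedding) covered by a fibrewise injective linear bundle embedding $\widehat\phi_{JI}$, intertwining sections and the maps $\psi$, with footprint $F_I\cap F_J$, satisfying a tangent bundle condition and the closedness condition (if $x_k\in U_{JI}\to x_\infty\in U_I$ and $\phi_{JI}(x_k)\to y_\infty$ then $x_\infty\in U_{JI}$,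 $y_\infty=\phi_{JI}(x_\infty)$). A virtual orbifold atlas: finite poset $(\mathcal{I},\preccurlyeq)$, charts $C_I$, coordinate changes $T_{JI}$ for $I\preccurlyeq J$, footprints covering $X$, cocycle condition $\widehat\phi_{KI}=\widehat\phi_{KJ}\circ\widehat\phi_{JI}$ on $U_{KI}\cap\phi_{JI}^{-1}(U_{KJ})$, and overlapping condition ($\overline{F_I}\cap\overline{F_J}\ne\emptyset\Rightarrow I\preccurlyeq J$ or $J\preccurlyeq I$). The relation $\curlyvee$ on $\bigsqcup_IU_I$: $x\in U_I$, $y\in U_J$ satisfy $x\curlyvee y$ iff ($I=J$, $x=y$) or ($I\preccurlyeq J$, $x\in U_{JI}$, $y=\phi_{JI}(x)$) or ($J\preccurlyeq I$, $y\in U_{IJ}$, $x=\phi_{IJ}(y)$). *)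

(* Defs.v *)
From HB Require Import structures.
From mathcomp Require Import all_boot all_order all_algebra.
From mathcomp Require Import all_classical all_reals all_analysis.
From Stdlib Require Rdefinitions Raxioms.

Set Implicit Arguments.
Unset Strict Implicit.
Unset Printing Implicit Defensive.

Import Order.TTheory GRing.Theory Num.Theory.
Local Open Scope classical_set_scope.

Definition metrizable (X : topologicalType) : Prop :=
  exists d : X -> X -> Rdefinitions.R,
    (forall x y, d x y = Rdefinitions.R0 <-> x = y) /\
    (forall x y, d x y = d y x) /\
    (forall x y z, Rdefinitions.Rle (d x z) (Rdefinitions.Rplus (d x y) (d y z))) /\
    (forall A : set X, open A <->
       forall x, A x -> exists e, Rdefinitions.Rlt Rdefinitions.R0 e /\
                  forall y, Rdefinitions.Rlt (d x y) e -> A y).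

Definition embedding_on (S T : topologicalType) (D : set S) (f : S -> T) : Prop :=
  {within D, continuous f} /\ {in D &, injective f} /\
  forall A : set S, open A -> exists B : set T, open B /\ f @` (A `&` D) = B `&` f @` D.

Definition open_embedding (S T : topologicalType) (f : S -> T) : Prop :=
  injective f /\ continuous f /\ open (range f) /\
  forall A : set S, open A -> exists B : set T, open B /\ f @` A = B `&` range f.

Definition qclass (T : topologicalType) (R : T -> T -> Prop) : Type :=
  {C : set T | exists x, C = R x}.

HB.instance Definition _ (T : topologicalType) (R : T -> T -> Prop) :=
  gen_eqMixin (qclass R).
HB.instance Definition _ (T : topologicalType) (R : T -> T -> Prop) :=
  gen_choiceMixin (qclass R).

Definition qpi (T : topologicalType) (R : T -> T -> Prop) (x : T) : qclass R :=
  exist (fun C => exists y, C = R y) (R x) (ex_intro _ x erefl).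

Definition qopen (T : topologicalType) (R : T -> T -> Prop) (U : set (qclass R)) :=
  open (qpi R @^-1` U).

Lemma qopenT (T : topologicalType) (R : T -> T -> Prop) : qopen (@setT (qclass R)).
Proof. by rewrite /qopen preimage_setT; exact: openT. Qed.

Lemma qopenI (T : topologicalType) (R : T -> T -> Prop) : setI_closed (@qopen T R).
Proof. by move=> A B oA oB; rewrite /qopen preimage_setI; exact: openI. Qed.

Lemma qopen_bigU (T : topologicalType) (R : T -> T -> Prop) (I : Type)
  (f : I -> set (qclass R)) : (forall i, qopen (f i)) -> qopen (\bigcup_i f i).
Proof.
by move=> h; rewrite /qopen preimage_bigcup; apply: bigcup_open => i _; exact: h.
Qed.

HB.instance Definition _ (T : topologicalType) (R : T -> T -> Prop) :=
  isOpenTopological.Build (qclass R) (@qopenT T R) (@qopenI T R) (@qopen_bigU T R).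

(** * Virtual orbifold charts (topological skeleton) *)
Record vchart (X : topologicalType) := VChart {
  cU : topologicalType;               (* underlying space of the orbifold U *)
  cE : topologicalType;               (* total space of the bundle E *)
  cproj : cE -> cU;
  czero : cU -> cE;
  cS : cU -> cE;
  cF : set X;
  cpsi : cU -> X                      (* psi, relevant on S^{-1}(0) *)
}.

Arguments cproj {X} v _.
Arguments czero {X} v _.
Arguments cS {X} v _.
Arguments cpsi {X} v _.

Definition zeroset X (C : vchart X) : set (cU C) := [set x | cS C x = czero C x].
Arguments zeroset {X} C _.

Definition is_vchart X (C : vchart X) : Prop :=
  [/\ continuous (cproj C) /\ continuous (czero C) /\ continuous (cS C),
      (forall x, cproj C (czero C x) = x), (forall x, cproj C (cS C x) = x),
      open (cF C) &
      cpsi C @` zeroset C = cF C /\ embedding_on (zeroset C) (cpsi C)].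

Record vcoord X (CI CJ : vchart X) := VCoord {
  ccU : set (cU CI);
  ccphi : cU CI -> cU CJ;             (* phi_JI, relevant on U_JI *)
  ccphihat : cE CI -> cE CJ           (* hat phi_JI, relevant over U_JI *)
}.

Arguments ccU {X CI CJ} v _.
Arguments ccphi {X CI CJ} v _.
Arguments ccphihat {X CI CJ} v _.

Definition is_vcoord X (CI CJ : vchart X) (T : vcoord CI CJ) : Prop :=
  [/\ open (ccU T) /\
      embedding_on (ccU T) (ccphi T),
      [/\ {within cproj CI @^-1` ccU T, continuous ccphihat T},
          (forall e, ccU T (cproj CI e) ->
             cproj CJ (ccphihat T e) = ccphi T (cproj CI e)),
          (forall e e', ccU T (cproj CI e) -> cproj CI e = cproj CI e' ->
             ccphihat T e = ccphihat T e' -> e = e') &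
          (forall x, ccU T x -> ccphihat T (czero CI x) = czero CJ (ccphi T x))],
      (forall x, ccU T x -> ccphihat T (cS CI x) = cS CJ (ccphi T x)) /\
      (forall x, ccU T x -> zeroset CI x -> cpsi CJ (ccphi T x) = cpsi CI x),
      cpsi CI @` (ccU T `&` zeroset CI) = cF CI `&` cF CJ &
      forall (u : nat -> cU CI) (xinf : cU CI) (yinf : cU CJ),
        (forall n, ccU T (u n)) -> u @ \oo --> xinf ->
        (ccphi T \o u) @ \oo --> yinf -> ccU T xinf /\ yinf = ccphi T xinf].

Record vatlas (X : topologicalType) := VAtlas {
  aidx : finType;
  ale : rel aidx;
  ach : aidx -> vchart X;
  acc : forall I J : aidx, vcoord (ach I) (ach J)   (* used only for I <= J *)
}.

Arguments ale {X} v _ _.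
Arguments ach {X} v _.
Arguments acc {X} v _ _.

Definition is_vatlas X (A : vatlas X) : Prop :=
  [/\
      (forall I, ale A I I) /\
      (forall I J, ale A I J -> ale A J I -> I = J) /\
      (forall I J K, ale A I J -> ale A J K -> ale A I K),
      (forall I, is_vchart (ach A I)) /\
      (forall I J, ale A I J -> is_vcoord (acc A I J)),
      (forall x : X, exists I, cF (ach A I) x),
      (forall I J K, ale A I J -> ale A J K -> forall e : cE (ach A I),
         ccU (acc A I K) (cproj (ach A I) e) -> ccU (acc A I J) (cproj (ach A I) e) ->
         ccU (acc A J K) (ccphi (acc A I J) (cproj (ach A I) e)) ->
         ccphihat (acc A I K) e = ccphihat (acc A J K) (ccphihat (acc A I J) e)) &
      (forall I J, closure (cF (ach A I)) `&` closure (cF (ach A J)) !=set0 ->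
         ale A I J \/ ale A J I)].

Definition vpt X (A : vatlas X) := {I : aidx A & cU (ach A I)}.

Definition curlyvee X (A : vatlas X) (p q : vpt A) : Prop :=
  match p, q with existT i x, existT j y =>
  (exists e : i = j, eq_rect i (fun K => cU (ach A K)) x j e = y) \/
  (ale A i j /\ ccU (acc A i j) x /\ y = ccphi (acc A i j) x) \/
  (ale A j i /\ ccU (acc A j i) y /\ x = ccphi (acc A j i) y)
  end.

Definition prop_equivalence (T : Type) (R : T -> T -> Prop) : Prop :=
  [/\ forall x, R x x, forall x y, R x y -> R y x &
      forall x y z, R x y -> R y z -> R x z].

Section Partial.
Variables (X : topologicalType) (A : vatlas X) (m : nat) (o : 'I_m -> aidx A).

(* indices i >= k (0-based) *)
Definition geidx (k : nat) := {i : 'I_m | k <= i}.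

Definition dunion (k : nat) : topologicalType :=
  {i : geidx k & cU (ach A (o (val i)))}.

Definition dunion_pt (k : nat) (p : dunion k) : vpt A :=
  existT _ (o (val (projT1 p))) (projT2 p).

Definition drel (k : nat) (p q : dunion k) : Prop :=
  curlyvee (dunion_pt p) (dunion_pt q).

Definition Aquot (k : nat) : topologicalType := qclass (@drel k).

Definition geidx_incl (k : nat) (i : geidx k.+1) : geidx k :=
  exist _ (val i) (ltnW (valP i)).

Definition dunion_incl (k : nat) (p : dunion k.+1) : dunion k :=
  existT (fun i : geidx k => cU (ach A (o (val i)))) (geidx_incl (projT1 p)) (projT2 p).
End Partial.

(* Main.v *)
Require Import Defs.
From HB Require Import structures.
From mathcomp Require Import all_boot all_order all_algebra.
From mathcomp Require Import all_classical all_reals all_analysis.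
Local Open Scope classical_set_scope.

Lemma qpi_eqP {T : topologicalType} {R : T -> T -> Prop} :
  prop_equivalence R -> forall p q, qpi R p = qpi R q <-> R p q.
Proof.
case=> r s t p q; split.
- move=> /(congr1 (@proj1_sig _ _)) /= e.
  have := r q; by rewrite -e.
- move=> pq; apply: eq_exist; apply/funext => z; apply/propext.
  split => [pz|qz]; [exact: t (s _ _ pq) pz | exact: t pq qz].
Qed.

Lemma qpi_surj {T : topologicalType} {R : T -> T -> Prop} (C : qclass R) :
  exists p, C = qpi R p.
Proof. case: C => C [x e]; exists x; exact: eq_exist. Qed.

Lemma qopenP {T : topologicalType} {R : T -> T -> Prop} (U : set (qclass R)) :
  open U <-> open (qpi R @^-1` U).
Proof. by []. Qed.

Theorem lemma7p33 (X : topologicalType) (A : vatlas X)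
  (m : nat) (o : 'I_m -> aidx A) :
  compact [set: X] -> metrizable X ->
  is_vatlas A ->
  prop_equivalence (@curlyvee X A) ->
  bijective o ->
  (forall (k : 'I_m) (J : aidx A), ale A (o k) J -> exists i : 'I_m, k <= i /\ o i = J) ->
  forall k : nat, k.+1 < m ->
  exists g : Aquot o k.+1 -> Aquot o k,
    (forall p : dunion o k.+1, g (qpi (@drel X A m o k.+1) p) = qpi (@drel X A m o k) (dunion_incl p)) /\
    open_embedding g.
Proof.
move=> _ _ hA heq [oinv oK _] hord k hk.
have oinj : injective o := can_inj oK.
case: hA => _ [_ hcc] _ _ _.
have eqv : forall k', prop_equivalence (@drel X A m o k').
  move=> kk; case: heq => r s t; split; [move=> x; exact: r | move=> x y; exact: s | move=> x y z; exact: t].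
pose R1 := @drel X A m o k.+1.
pose R0 := @drel X A m o k.
pose g (C : Aquot o k.+1) : Aquot o k :=
  qpi R0 (dunion_incl (projT1 (cid (proj2_sig C)))).
have gE : forall p, g (qpi R1 p) = qpi R0 (dunion_incl p).
  move=> p; rewrite /g; case: cid => q /= e.
  apply/(qpi_eqP (eqv k)).
  have : R1 q q by case: (eqv k.+1) => r _ _; apply: r.
  rewrite /R1 -e => h; case: (eqv k) => _ s _; apply: s; exact: h.
exists g; split => //.
have [r0 s0 t0] := eqv k.
have [r1 s1 t1] := eqv k.+1.
have ginj : injective g.
  move=> C1 C2; have [p1 ->] := qpi_surj C1; have [p2 ->] := qpi_surj C2.
  rewrite !gE => /(qpi_eqP (eqv k)) h; apply/(qpi_eqP (eqv k.+1)); exact: h.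
have gcont : continuous g.
  apply/continuousP => V /qopenP /sigT_openP oV; apply/qopenP.
  have -> : qpi R1 @^-1` (g @^-1` V) = @dunion_incl X A m o k @^-1` (qpi R0 @^-1` V).
    by apply/seteqP; split => p /=; rewrite gE.
  apply/sigT_openP => j; exact: (oV (geidx_incl j)).
have keyopen : forall U : set (Aquot o k.+1), open U -> open (g @` U).
  move=> U /qopenP /sigT_openP oU; apply/qopenP; apply/sigT_openP => i.
  case: (ltnP k (val i)) => hi.
  - pose j : geidx m k.+1 := exist _ (val i) hi.
    have -> : existT _ i @^-1` (qpi R0 @^-1` (g @` U)) = existT _ j @^-1` (qpi R1 @^-1` U).
      apply/seteqP; split => x /=.
      + case=> C UC gC; move: UC gC; have [q ->] := qpi_surj C.
        rewrite gE => UC /(qpi_eqP (eqv k)) h.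
        suff <- : qpi R1 q = qpi R1 (existT _ j x) by [].
        apply/(qpi_eqP (eqv k.+1)); exact: h.
      + move=> Ux; exists (qpi R1 (existT _ j x)) => //; rewrite gE.
        apply/(qpi_eqP (eqv k)); exact: r0.
    exact: oU.
  - have -> : existT _ i @^-1` (qpi R0 @^-1` (g @` U)) =
      \bigcup_(j : geidx m k.+1) [set x | ale A (o (val i)) (o (val j)) /\
         ccU (acc A (o (val i)) (o (val j))) x /\
         U (qpi R1 (existT _ j (ccphi (acc A (o (val i)) (o (val j))) x)))].
      apply/seteqP; split => x /=.
      + case=> C UC gC; move: UC gC; have [[j y] ->] := qpi_surj C.
        rewrite gE => UC /(qpi_eqP (eqv k)) /s0.
        rewrite /drel /curlyvee /= => -[[e _]|[[hle [hU hy]]|[hle _]]].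
        * have : k < nat_of_ord (sval j) := valP j; rewrite -(oinj _ _ e) => /leq_trans/(_ hi).
          by rewrite ltnn.
        * exists j => //; split => //; split => //; by rewrite -hy.
        * have [i' [hji' ei']] := hord _ _ hle.
          have : k < nat_of_ord (sval j) := valP j; move=> /leq_trans/(_ hji'); rewrite (oinj _ _ ei').
          by move=> /leq_trans/(_ hi); rewrite ltnn.
      + case=> j _ [hle [hU hY]].
        exists (qpi R1 (existT _ j (ccphi (acc A (o (val i)) (o (val j))) x))) => //.
        rewrite gE; apply/(qpi_eqP (eqv k)); apply: s0.
        rewrite /drel /curlyvee /=; right; left; by split.
    apply: bigcup_open => j _.
    case: (pselect (ale A (o (val i)) (o (val j)))) => hle; last first.
      have -> : [set x | ale A (o (val i)) (o (val j)) /\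
         ccU (acc A (o (val i)) (o (val j))) x /\
         U (qpi R1 (existT _ j (ccphi (acc A (o (val i)) (o (val j))) x)))] = set0.
        by apply/seteqP; split => x // [].
      exact: open0.
    have [[oUJI [cont _]] _ _ _ _] := hcc _ _ hle.
    pose f : cU (ach A (o (val i))) -> cU (ach A (o (val j))) :=
      ccphi (acc A (o (val i)) (o (val j))).
    pose D : set (cU (ach A (o (val i)))) := ccU (acc A (o (val i)) (o (val j))).
    have cont' : {in D, continuous f}.
      by rewrite -continuous_open_subspace.
    have := (continuous_inP _ oUJI).1 cont' _ (oU j).
    congr open; apply/seteqP; split => x /=.
    + by case=> hx hy; split.
    + by case=> _ [hx hy].
split => //; split => //; split.
  by apply: keyopen; exact: openT.
move=> U oU; exists (g @` U); split; first exact: keyopen.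
by rewrite setIidl // => _ [x _ <-]; exists x.
Qed.
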